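(* For an idempotent semiring $S$ the following are equivalent: (1) $S$ satisfies $x+xyx\approx x$; (2) $\mathcal{D}^{\bullet}$ is a congruence on $S$ and $S/\mathcal{D}^{\bullet}\in\mathbf{LZ}^{+}\circ\mathbf{D}$.
   Context: An idempotent semiring is an algebra $(S,+,\cdot)$ with $(S,+)$, $(S,\cdot)$ bands and both distributive laws; addition not assumed commutative. $a\,\mathcal{D}^{\bullet}\,b$ iff $aba=a$ and $bab=b$. $\mathbf{D}$ is the variety of distributive lattices (idempotent semirings satisfying $x+y\approx y+x$, $xy\approx yx$, $x+xy\approx x$); $\mathbf{LZ}^{+}$ is the variety of idempotent semirings satisfying $x+y\approx x$. For classes $\mathbf{V},\mathbf{W}$ of idempotent semirings, the Mal'cev product $\mathbf{V}\circ\mathbf{W}$ is the class of idempotent semirings $S$ admitting a congruence $\rho$ with $S/\rho\in\mathbf{W}$ and every $\rho$-class (a subsemiring) belonging to $\mathbf{V}$. *)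

(* Defs.v *)
From Stdlib Require Import ClassicalEpsilon.

Set Implicit Arguments.

Section IdemSemiring.
Variable T : Type.
Variables add mul : T -> T -> T.

(** An idempotent semiring: (T,+) and (T,.) are bands, both distributive
    laws hold; addition is NOT assumed commutative. *)
Definition idem_semiring : Prop :=
  (forall x y z, add x (add y z) = add (add x y) z) /\
  (forall x, add x x = x) /\
  (forall x y z, mul x (mul y z) = mul (mul x y) z) /\
  (forall x, mul x x = x) /\
  (forall x y z, mul x (add y z) = add (mul x y) (mul x z)) /\
  (forall x y z, mul (add x y) z = add (mul x z) (mul y z)).

Definition congruence (r : T -> T -> Prop) : Prop :=
  (forall x, r x x) /\
  (forall x y, r x y -> r y x) /\
  (forall x y z, r x y -> r y z -> r x z) /\
  (forall x x' y y', r x x' -> r y y' -> r (add x y) (add x' y')) /\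
  (forall x x' y y', r x x' -> r y y' -> r (mul x y) (mul x' y')).

Definition Dbul (a b : T) : Prop :=
  mul (mul a b) a = a /\ mul (mul b a) b = b.

(** The variety D of distributive lattices. *)
Definition in_D : Prop :=
  idem_semiring /\
  (forall x y, add x y = add y x) /\
  (forall x y, mul x y = mul y x) /\
  (forall x y, add x (mul x y) = x).

Definition in_LZplus : Prop :=
  idem_semiring /\ (forall x y, add x y = x).

(** Quotient algebra S/r, carrier = set of r-classes. *)
Definition quot (r : T -> T -> Prop) : Type :=
  { P : T -> Prop | exists x, P = r x }.

Definition qcls (r : T -> T -> Prop) (x : T) : quot r :=
  exist _ (r x) (ex_intro _ x eq_refl).

Definition qrep (r : T -> T -> Prop) (A : quot r) : T :=
  proj1_sig (constructive_indefinite_description _ (proj2_sig A)).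

Definition qadd (r : T -> T -> Prop) (A B : quot r) : quot r :=
  qcls r (add (qrep A) (qrep B)).

Definition qmul (r : T -> T -> Prop) (A B : quot r) : quot r :=
  qcls r (mul (qrep A) (qrep B)).

Definition cls (r : T -> T -> Prop) (a : T) : Type := { x : T | r a x }.

Lemma cls_add_closed (r : T -> T -> Prop) :
  congruence r -> idem_semiring ->
  forall a x y, r a x -> r a y -> r a (add x y).
Proof.
  intros [Hrf [Hs [Ht [Ha Hm]]]] [_ [Hai _]] a x y Hx Hy.
  rewrite <- (Hai a) at 1. apply Ha; assumption.
Qed.

Lemma cls_mul_closed (r : T -> T -> Prop) :
  congruence r -> idem_semiring ->
  forall a x y, r a x -> r a y -> r a (mul x y).
Proof.
  intros [Hrf [Hs [Ht [Ha Hm]]]] [_ [_ [_ [Hmi _]]]] a x y Hx Hy.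
  rewrite <- (Hmi a) at 1. apply Hm; assumption.
Qed.

Definition cadd (r : T -> T -> Prop) (Hc : congruence r) (Hs : idem_semiring)
  (a : T) (x y : cls r a) : cls r a :=
  exist _ (add (proj1_sig x) (proj1_sig y))
    (cls_add_closed Hc Hs a _ _ (proj2_sig x) (proj2_sig y)).

Definition cmul (r : T -> T -> Prop) (Hc : congruence r) (Hs : idem_semiring)
  (a : T) (x y : cls r a) : cls r a :=
  exist _ (mul (proj1_sig x) (proj1_sig y))
    (cls_mul_closed Hc Hs a _ _ (proj2_sig x) (proj2_sig y)).

End IdemSemiring.

Definition sr_class := forall T : Type, (T -> T -> T) -> (T -> T -> T) -> Prop.

Definition malcev (V W : sr_class) (T : Type) (add mul : T -> T -> T) : Prop :=
  exists (Hs : idem_semiring add mul) (rho : T -> T -> Prop)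
         (Hc : congruence add mul rho),
    W (quot rho) (@qadd T add rho) (@qmul T mul rho) /\
    forall a : T, V (cls rho a) (@cadd T add mul rho Hc Hs a) (@cmul T add mul rho Hc Hs a).

Definition D_class : sr_class := fun T add mul => in_D add mul.
Definition LZplus_class : sr_class := fun T add mul => in_LZplus add mul.

(* Main.v *)
Require Import Defs.
From Stdlib Require Import List ProofIrrelevance FunctionalExtensionality PropExtensionality ClassicalEpsilon.
Import ListNotations.

Section Band.
Variable T : Type.
Variable mul : T -> T -> T.
Local Infix "*" := mul.
Hypothesis mA : forall a b c, a * (b * c) = a * b * c.
Hypothesis mI : forall a, a * a = a.

Definition omul (o1 o2 : option T) : option T :=
  match o1, o2 with
  | None, _ => o2
  | _, None => o1
  | Some a, Some b => Some (a * b)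
  end.
Fixpoint ev (l : list T) : option T :=
  match l with nil => None | a :: l' => omul (Some a) (ev l') end.

Lemma omul_assoc o1 o2 o3 : omul o1 (omul o2 o3) = omul (omul o1 o2) o3.
Proof. destruct o1, o2, o3; simpl; try reflexivity. rewrite mA; reflexivity. Qed.

Lemma ev_app l1 l2 : ev (l1 ++ l2) = omul (ev l1) (ev l2).
Proof.
  induction l1 as [|a l1 IH].
  - reflexivity.
  - change (omul (Some a) (ev (l1 ++ l2)) = omul (omul (Some a) (ev l1)) (ev l2)).
    rewrite IH, omul_assoc. reflexivity.
Qed.

Lemma ev_ctx p u v s : ev u = ev v -> ev (p ++ u ++ s) = ev (p ++ v ++ s).
Proof. intro H. rewrite !ev_app, H. reflexivity. Qed.

Lemma ev_sq w : ev (w ++ w) = ev w.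
Proof. rewrite ev_app. destruct (ev w); simpl; [rewrite mI|]; reflexivity. Qed.

Lemma band3 x y z : x * y * z * y * (x * y * z) = x * y * z.
Proof.
  assert (H : ev [x;y;z;y;x;y;z] = ev [x;y;z]).
  { transitivity (ev [x;y;x;y;z;y;x;y;z]).
    { symmetry. exact (ev_ctx [] [x;y;x;y] [x;y] [z;y;x;y;z] (ev_sq [x;y])). }
    transitivity (ev [x;y;x;y;z]).
    { exact (ev_ctx [x] [y;x;y;z;y;x;y;z] [y;x;y;z] [] (ev_sq [y;x;y;z])). }
    exact (ev_ctx [] [x;y;x;y] [x;y] [z] (ev_sq [x;y])). }
  simpl in H. injection H as H. rewrite <- !mA. exact H.
Qed.

Lemma D_trans a b c :
  a * b * a = a -> b * a * b = b -> b * c * b = b -> c * b * c = c ->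
  a * c * a = a.
Proof.
  intros H1 H2 H3 H4.
  assert (Ha : a = a * b * c * (b * a)).
  { rewrite <- H1 at 1. rewrite <- H3 at 1. rewrite !mA. reflexivity. }
  rewrite Ha at 1 2. rewrite (band3 (a*b) c (b*a)). symmetry. exact Ha.
Qed.

Lemma R_right x y c : x * y = y -> y * x = x -> x * c * (y * c) * (x * c) = x * c.
Proof.
  intros H1 H2.
  assert (H : ev [x;c;y;c;x;c] = ev [x;c]).
  { transitivity (ev [x;c;y;c;y;x;c]).
    { apply (ev_ctx [x;c;y;c] [x] [y;x] [c]). simpl. rewrite H2. reflexivity. }
    transitivity (ev [x;c;y;x;c]).
    { exact (ev_ctx [x] [c;y;c;y] [c;y] [x;c] (ev_sq [c;y])). }
    transitivity (ev [x;c;x;c]).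
    { apply (ev_ctx [x;c] [y;x] [x] [c]). simpl. rewrite H2. reflexivity. }
    exact (ev_ctx [] [x;c;x;c] [x;c] [] (ev_sq [x;c])). }
  simpl in H. injection H as H. rewrite <- !mA. exact H.
Qed.
End Band.


Section SR.
Variable T : Type.
Variables add mul : T -> T -> T.
Local Infix "+" := add.
Local Infix "*" := mul.
Hypothesis aA : forall a b c, a + (b + c) = a + b + c.
Hypothesis aI : forall a, a + a = a.
Hypothesis mA : forall a b c, a * (b * c) = a * b * c.
Hypothesis mI : forall a, a * a = a.
Hypothesis dl : forall a b c, a * (b + c) = a * b + a * c.
Hypothesis dr : forall a b c, (a + b) * c = a * c + b * c.
Hypothesis HI : forall x y, x + x * y * x = x.

Lemma L_M x y : x + x * y + y = x + y.
Proof.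
  assert (HAx : (x + x * y + y) * x = (x + y) * x).
  { rewrite !dr, !mI, HI. reflexivity. }
  assert (HAy : (x + x * y + y) * y = (x + y) * y).
  { rewrite !dr, <- mA, !mI, aI. reflexivity. }
  assert (H1 : x + x * y + y = (x + y) * (x + x * y + y)).
  { transitivity ((x + x * y + y) * (x + x * y + y)). symmetry; apply mI.
    rewrite (dl (x + x * y + y) (x + x * y) y), (dl (x + x * y + y) x (x * y)).
    rewrite (mA (x + x * y + y) x y), HAx, HAy.
    rewrite <- (mA (x + y) x y), <- dl, <- dl. reflexivity. }
  assert (Hxsy : x * ((x + y) * y) = x * y).
  { rewrite dr, mI, dl, mA, mI, aI. reflexivity. }
  assert (H2 : (x + y) * (x + x * y + y) = x + y).
  { rewrite !dl.
    rewrite <- Hxsy. rewrite (mA (x + y) x ((x + y) * y)).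
    rewrite <- aA.
    rewrite <- (mI ((x + y) * y)) at 2.
    rewrite <- dr.
    rewrite <- dl, mI.
    rewrite mA, mI, <- dl. apply mI. }
  rewrite H1 at 1. exact H2.
Qed.
End SR.

Section SR2.
Variable T : Type.
Variables add mul : T -> T -> T.
Local Infix "+" := add.
Local Infix "*" := mul.
Hypothesis aA : forall a b c, a + (b + c) = a + b + c.
Hypothesis aI : forall a, a + a = a.
Hypothesis mA : forall a b c, a * (b * c) = a * b * c.
Hypothesis mI : forall a, a * a = a.
Hypothesis dl : forall a b c, a * (b + c) = a * b + a * c.
Hypothesis dr : forall a b c, (a + b) * c = a * c + b * c.
Hypothesis HI : forall x y, x + x * y * x = x.
Lemma L_G x y c : x * y = y -> y * x = x -> y + x * c = y + y * c.
Proof.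
  intros Hxy Hyx.
  assert (G1 : y + y * c + x * c = y + x * c).
  { pose proof (L_M T add mul aA aI mA mI dl dr HI y c) as HM.
    apply (f_equal (mul x)) in HM. rewrite !dl in HM. rewrite mA, Hxy in HM. exact HM. }
  pose proof (HI (y + c) x) as H. apply (f_equal (mul y)) in H.
  assert (mI' : forall a b, a * b * b = a * b) by (intros; rewrite <- mA, mI; reflexivity).
  assert (Hxy' : forall a, a * x * y = a * y) by (intros; rewrite <- mA, Hxy; reflexivity).
  assert (Hyx' : forall a, a * y * x = a * x) by (intros; rewrite <- mA, Hyx; reflexivity).
  repeat (rewrite ?dl, ?dr in H). repeat rewrite mA in H. repeat rewrite aA in H.
  repeat (rewrite ?mI, ?mI', ?Hxy, ?Hxy', ?Hyx, ?Hyx' in H).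
  rewrite <- (aA (y + y * c) y (y * c * y)), HI in H.
  assert (H2 : y + y * c + (y + x * c) = y + x * c).
  { rewrite <- G1 at 1. rewrite aA, aI. exact G1. }
  rewrite <- (aA (y + y * c) y (x * c)), H2 in H.
  assert (Hey : (y + y * c) * y = y) by (rewrite dr, mI, HI; reflexivity).
  assert (Hf : y + x * c = y * (x * (y + c))).
  { rewrite dl, Hxy, dl, mI, mA, Hyx. reflexivity. }
  assert (Hef : (y + y * c) * (y + x * c) = y + x * c).
  { rewrite Hf at 1. rewrite mA, Hey. symmetry; exact Hf. }
  assert (Hef2 : (y + y * c) * (y + x * c) = y + x * c + y * c * x * c).
  { rewrite dl, Hey, dr, mA, Hyx, <- (mA (y * c) x c), (mA (y*c) x c), aA. reflexivity. }
  rewrite Hef in Hef2. rewrite <- Hef2 in H. exact H.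
Qed.

Lemma L_K x y c : x * y = y -> y * x = x -> (x + c) * (y + c) = y + c.
Proof.
  intros Hxy Hyx.
  rewrite (dr x c (y + c)), (dl x y c), Hxy, (L_G x y c Hxy Hyx).
  transitivity ((y + c) * (y + c)); [|apply mI].
  rewrite (dr y c (y + c)), (dl y y c), mI. reflexivity.
Qed.

Lemma L_d2 x y c : x * y = y -> y * x = x -> x * c + y * c = x * c.
Proof.
  intros Hxy Hyx.
  pose proof (L_G y x c Hyx Hxy) as H.
  apply (f_equal (fun t => t * c)) in H. rewrite !dr, <- !mA, !mI, aI in H. exact H.
Qed.

Lemma L_T x y c : x * y = y -> (c + x) * (c + y) = c + (x * c + y).
Proof.
  intros Hxy.
  rewrite (dr c x (c + y)), (dl c c y), (dl x c y), mI, Hxy.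
  pose proof (L_M T add mul aA aI mA mI dl dr HI c (x * c + y)) as HM.
  rewrite (dl c (x * c) y), (mA c x c), (aA c (c * x * c) (c * y)), HI in HM.
  rewrite <- HM. rewrite <- aA. reflexivity.
Qed.

Lemma L_left x y c : x * y = y -> y * x = x -> (c + y) * (c + x) * (c + y) = c + y.
Proof.
  intros Hxy Hyx.
  rewrite <- mA, (L_T x y c Hxy).
  rewrite (dr c y), (dl c c), (dl c (x * c) y), mI, (mA c x c), (aA c (c * x * c)), HI.
  rewrite (dl y c), (dl y (x * c) y), (mA y x c), Hyx, mI, (aA (y * c) (x * c) y).
  rewrite (L_d2 y x c Hyx Hxy).
  transitivity ((c + y) * (c + y)); [|apply mI].
  rewrite (dr c y), (dl c c y), (dl y c y), !mI. reflexivity.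
Qed.
End SR2.


Lemma R_left_mult (T : Type) (mul : T -> T -> T)
  (mA : forall a b c, mul a (mul b c) = mul (mul a b) c) (mI : forall a, mul a a = a)
  x y c : mul x y = y -> mul y x = x -> Dbul mul (mul c x) (mul c y).
Proof.
  intros Hxy Hyx.
  assert (H1 : mul (mul c x) (mul c y) = mul c y).
  { rewrite <- Hxy at 1. rewrite (mA c x y), (mA (mul c x) (mul c x) y), mI, <- mA, Hxy. reflexivity. }
  assert (H2 : mul (mul c y) (mul c x) = mul c x).
  { rewrite <- Hyx at 1. rewrite (mA c y x), (mA (mul c y) (mul c y) x), mI, <- mA, Hyx. reflexivity. }
  split; [rewrite H1, H2 | rewrite H2, H1]; reflexivity.
Qed.

Lemma R_right_D (T : Type) (mul : T -> T -> T)
  (mA : forall a b c, mul a (mul b c) = mul (mul a b) c) (mI : forall a, mul a a = a)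
  x y c : mul x y = y -> mul y x = x -> Dbul mul (mul x c) (mul y c).
Proof.
  intros Hxy Hyx. split.
  - apply (R_right T mul mA mI); assumption.
  - apply (R_right T mul mA mI); assumption.
Qed.

Lemma Dbul_dual (T : Type) (mul : T -> T -> T)
  (mA : forall a b c, mul a (mul b c) = mul (mul a b) c) a b :
  Dbul (fun u v => mul v u) a b <-> Dbul mul a b.
Proof.
  unfold Dbul. rewrite !mA. tauto.
Qed.

Lemma Dbul_trans (T : Type) (mul : T -> T -> T)
  (mA : forall a b c, mul a (mul b c) = mul (mul a b) c) (mI : forall a, mul a a = a)
  a b c : Dbul mul a b -> Dbul mul b c -> Dbul mul a c.
Proof.
  intros [H1 H2] [H3 H4]. split.
  - apply (D_trans T mul mA mI a b c); assumption.
  - apply (D_trans T mul mA mI c b a); assumption.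
Qed.

Lemma D_via_RL (T : Type) (mul : T -> T -> T)
  (mA : forall a b c, mul a (mul b c) = mul (mul a b) c) (mI : forall a, mul a a = a)
  (F : T -> T)
  (HR : forall x y, mul x y = y -> mul y x = x -> Dbul mul (F x) (F y))
  (HL : forall x y, mul x y = x -> mul y x = y -> Dbul mul (F x) (F y)) :
  forall a b, Dbul mul a b -> Dbul mul (F a) (F b).
Proof.
  intros a b [H1 H2].
  apply (Dbul_trans T mul mA mI _ (F (mul a b))).
  - apply HR.
    + rewrite mA, mI. reflexivity.
    + exact H1.
  - apply HL.
    + rewrite <- mA, mI. reflexivity.
    + rewrite mA. exact H2.
Qed.

Lemma Dcong (T : Type) (add mul : T -> T -> T) (HS : idem_semiring add mul)
  (HI : forall x y, add x (mul (mul x y) x) = x) :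
  congruence add mul (Dbul mul).
Proof.
  destruct HS as [aA [aI [mA [mI [dl dr]]]]].
  set (mul' := fun u v => mul v u).
  assert (mA' : forall a b c, mul' a (mul' b c) = mul' (mul' a b) c).
  { intros; unfold mul'; symmetry; apply mA. }
  assert (mI' : forall a, mul' a a = a) by (intros; apply mI).
  assert (dl' : forall a b c, mul' a (add b c) = add (mul' a b) (mul' a c)) by (intros; apply dr).
  assert (dr' : forall a b c, mul' (add a b) c = add (mul' a c) (mul' b c)) by (intros; apply dl).
  assert (HI' : forall x y, add x (mul' (mul' x y) x) = x).
  { intros; unfold mul'. rewrite mA. apply HI. }
  assert (toD : forall a b, Dbul mul' a b -> Dbul mul a b).
  { intros a b H. apply (proj1 (Dbul_dual T mul mA a b)). exact H. }
  assert (Dsym : forall a b, Dbul mul a b -> Dbul mul b a) by (intros a b [H1 H2]; split; assumption).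
  assert (Rr : forall c, forall a b, Dbul mul a b -> Dbul mul (add a c) (add b c)).
  { intro c. apply (D_via_RL T mul mA mI (fun t => add t c)).
    - intros x y Hxy Hyx. split.
      + rewrite (L_K T add mul aA aI mA mI dl dr HI x y c Hxy Hyx).
        apply (L_K T add mul aA aI mA mI dl dr HI y x c Hyx Hxy).
      + rewrite (L_K T add mul aA aI mA mI dl dr HI y x c Hyx Hxy).
        apply (L_K T add mul aA aI mA mI dl dr HI x y c Hxy Hyx).
    - intros x y Hxy Hyx. apply toD. split.
      + rewrite (L_K T add mul' aA aI mA' mI' dl' dr' HI' x y c Hyx Hxy).
        apply (L_K T add mul' aA aI mA' mI' dl' dr' HI' y x c Hxy Hyx).
      + rewrite (L_K T add mul' aA aI mA' mI' dl' dr' HI' y x c Hxy Hyx).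
        apply (L_K T add mul' aA aI mA' mI' dl' dr' HI' x y c Hyx Hxy). }
  assert (Rl : forall c, forall a b, Dbul mul a b -> Dbul mul (add c a) (add c b)).
  { intro c. apply (D_via_RL T mul mA mI (fun t => add c t)).
    - intros x y Hxy Hyx. split.
      + apply (L_left T add mul aA aI mA mI dl dr HI y x c Hyx Hxy).
      + apply (L_left T add mul aA aI mA mI dl dr HI x y c Hxy Hyx).
    - intros x y Hxy Hyx. apply toD. split.
      + apply (L_left T add mul' aA aI mA' mI' dl' dr' HI' y x c Hxy Hyx).
      + apply (L_left T add mul' aA aI mA' mI' dl' dr' HI' x y c Hyx Hxy). }
  assert (Mr : forall c, forall a b, Dbul mul a b -> Dbul mul (mul a c) (mul b c)).
  { intro c. apply (D_via_RL T mul mA mI (fun t => mul t c)).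
    - intros x y Hxy Hyx. apply (R_right_D T mul mA mI); assumption.
    - intros x y Hxy Hyx. apply toD. apply (R_left_mult T mul' mA' mI'); assumption. }
  assert (Ml : forall c, forall a b, Dbul mul a b -> Dbul mul (mul c a) (mul c b)).
  { intro c. apply (D_via_RL T mul mA mI (fun t => mul c t)).
    - intros x y Hxy Hyx. apply (R_left_mult T mul mA mI); assumption.
    - intros x y Hxy Hyx. apply toD. apply (R_right_D T mul' mA' mI'); assumption. }
  split; [|split; [|split; [|split]]].
  - intro x. split; rewrite !mI; reflexivity.
  - exact Dsym.
  - intros x y z. apply (Dbul_trans T mul mA mI).
  - intros x x' y y' H1 H2. apply (Dbul_trans T mul mA mI _ (add x' y)).
    + apply Rr; exact H1.
    + apply Rl; exact H2.
  - intros x x' y y' H1 H2. apply (Dbul_trans T mul mA mI _ (mul x' y)).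
    + apply Mr; exact H1.
    + apply Ml; exact H2.
Qed.


Lemma sig_eq (A : Type) (P : A -> Prop) (a b : sig P) : proj1_sig a = proj1_sig b -> a = b.
Proof. destruct a as [a pa], b as [b pb]; simpl; intro H; subst; f_equal; apply proof_irrelevance. Qed.

Lemma qcls_eq (T : Type) (r : T -> T -> Prop)
  (Hrf : forall x, r x x) (Hsy : forall x y, r x y -> r y x) (Htr : forall x y z, r x y -> r y z -> r x z)
  x y : qcls r x = qcls r y <-> r x y.
Proof.
  split.
  - intro H. apply (f_equal (@proj1_sig _ _)) in H. simpl in H. rewrite H. apply Hrf.
  - intro H. apply sig_eq. simpl. apply functional_extensionality. intro z.
    apply propositional_extensionality. split; intro Hz; eauto.
Qed.

Lemma qrep_spec (T : Type) (r : T -> T -> Prop) (A : quot r) : qcls r (qrep A) = A.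
Proof.
  apply sig_eq. simpl. unfold qrep.
  destruct (constructive_indefinite_description _ _) as [x Hx]. simpl. symmetry; exact Hx.
Qed.

Lemma quot_surj (T : Type) (r : T -> T -> Prop) (A : quot r) : exists x, A = qcls r x.
Proof. exists (qrep A). symmetry; apply qrep_spec. Qed.

Lemma r_qrep (T : Type) (add mul : T -> T -> T) (r : T -> T -> Prop) (Hc : congruence add mul r) x :
  r (qrep (qcls r x)) x.
Proof.
  destruct Hc as [Hrf [Hsy [Htr _]]].
  apply (proj1 (qcls_eq T r Hrf Hsy Htr _ _)). apply qrep_spec.
Qed.

Lemma qadd_cls (T : Type) (add mul : T -> T -> T) (r : T -> T -> Prop) (Hc : congruence add mul r) x y :
  qadd add (qcls r x) (qcls r y) = qcls r (add x y).
Proof.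
  pose proof (r_qrep T add mul r Hc x) as Hx. pose proof (r_qrep T add mul r Hc y) as Hy.
  destruct Hc as [Hrf [Hsy [Htr [Ha Hm]]]].
  unfold qadd. apply (proj2 (qcls_eq T r Hrf Hsy Htr _ _)). apply Ha; assumption.
Qed.

Lemma qmul_cls (T : Type) (add mul : T -> T -> T) (r : T -> T -> Prop) (Hc : congruence add mul r) x y :
  qmul mul (qcls r x) (qcls r y) = qcls r (mul x y).
Proof.
  pose proof (r_qrep T add mul r Hc x) as Hx. pose proof (r_qrep T add mul r Hc y) as Hy.
  destruct Hc as [Hrf [Hsy [Htr [Ha Hm]]]].
  unfold qmul. apply (proj2 (qcls_eq T r Hrf Hsy Htr _ _)). apply Hm; assumption.
Qed.

Lemma quot_idem (T : Type) (add mul : T -> T -> T) (r : T -> T -> Prop) (Hc : congruence add mul r)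
  (HS : idem_semiring add mul) : idem_semiring (qadd add (r:=r)) (qmul mul (r:=r)).
Proof.
  destruct HS as [aA [aI [mA [mI [dl dr]]]]].
  pose proof (qadd_cls T add mul r Hc) as QA. pose proof (qmul_cls T add mul r Hc) as QM.
  split; [|split; [|split; [|split; [|split]]]].
  - intros X Y Z. destruct (quot_surj T r X) as [x ->], (quot_surj T r Y) as [y ->], (quot_surj T r Z) as [z ->].
    rewrite !QA, aA. reflexivity.
  - intros X. destruct (quot_surj T r X) as [x ->]. rewrite QA, aI. reflexivity.
  - intros X Y Z. destruct (quot_surj T r X) as [x ->], (quot_surj T r Y) as [y ->], (quot_surj T r Z) as [z ->].
    rewrite !QM, mA. reflexivity.
  - intros X. destruct (quot_surj T r X) as [x ->]. rewrite QM, mI. reflexivity.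
  - intros X Y Z. destruct (quot_surj T r X) as [x ->], (quot_surj T r Y) as [y ->], (quot_surj T r Z) as [z ->].
    rewrite QA, !QM, QA, dl. reflexivity.
  - intros X Y Z. destruct (quot_surj T r X) as [x ->], (quot_surj T r Y) as [y ->], (quot_surj T r Z) as [z ->].
    rewrite QA, !QM, QA, dr. reflexivity.
Qed.


Lemma LZD (U : Type) (add mul : U -> U -> U) (HS : idem_semiring add mul)
  (Hcomm : forall x y, mul x y = mul y x) (Habs : forall x y, add x (mul x y) = x) :
  exists (rho : U -> U -> Prop) (Hc : congruence add mul rho),
    @D_class (quot rho) (qadd add (r:=rho)) (qmul mul (r:=rho)) /\
    forall a : U, @LZplus_class (cls rho a) (cadd Hc HS (a:=a)) (cmul Hc HS (a:=a)).
Proof.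
  pose proof HS as HS'.
  destruct HS' as [aA [aI [mA [mI [dl dr]]]]].
  assert (LR : forall a b, add (add a b) a = add a b).
  { intros a b.
    assert (Hza : mul (add a b) a = a).
    { rewrite Hcomm, dl, mI, Habs. reflexivity. }
    rewrite <- Hza at 2. apply Habs. }
  set (rho := fun a b : U => add a b = a /\ add b a = b).
  assert (Hrf : forall x, rho x x) by (intro x; split; apply aI).
  assert (Hsy : forall x y, rho x y -> rho y x) by (intros x y [H1 H2]; split; assumption).
  assert (Htr : forall x y z, rho x y -> rho y z -> rho x z).
  { intros x y z [H1 H2] [H3 H4]. split.
    - rewrite <- H1 at 1. rewrite <- aA, H3. exact H1.
    - rewrite <- H4 at 1. rewrite <- aA, H2. exact H4. }
  assert (Hadd1 : forall a a' b b', rho a a' -> rho b b' -> add (add a b) (add a' b') = add a b).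
  { intros a a' b b' [H1 H2] [H3 H4].
    rewrite aA. rewrite <- (LR a b) at 1. rewrite <- (aA (add a b) a a'), H1, LR.
    rewrite <- aA, H3. reflexivity. }
  assert (Hmul1 : forall a a' b b', rho a a' -> rho b b' -> add (mul a b) (mul a' b') = mul a b).
  { intros a a' b b' [H1 H2] [H3 H4].
    assert (E : mul a b = add (add (add (mul a b) (mul a b')) (mul a' b)) (mul a' b')).
    { rewrite <- H1 at 1. rewrite <- H3 at 1. rewrite dr, !dl, aA. reflexivity. }
    rewrite E at 1. rewrite <- aA, aI. symmetry. exact E. }
  assert (Hc : congruence add mul rho).
  { split; [exact Hrf|split; [exact Hsy|split; [exact Htr|split]]].
    - intros x x' y y' H1 H2. split.
      + apply Hadd1; assumption.
      + apply Hadd1; apply Hsy; assumption.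
    - intros x x' y y' H1 H2. split.
      + apply Hmul1; assumption.
      + apply Hmul1; apply Hsy; assumption. }
  exists rho, Hc. split.
  - pose proof (qadd_cls U add mul rho Hc) as QA. pose proof (qmul_cls U add mul rho Hc) as QM.
    split; [apply (quot_idem U add mul rho Hc HS)|split; [|split]].
    + intros X Y. destruct (quot_surj U rho X) as [x ->], (quot_surj U rho Y) as [y ->].
      rewrite !QA. apply (proj2 (qcls_eq U rho Hrf Hsy Htr _ _)). split.
      * rewrite aA, <- (aA x y y), aI. apply LR.
      * rewrite aA, <- (aA y x x), aI. apply LR.
    + intros X Y. destruct (quot_surj U rho X) as [x ->], (quot_surj U rho Y) as [y ->].
      rewrite !QM, Hcomm. reflexivity.
    + intros X Y. destruct (quot_surj U rho X) as [x ->], (quot_surj U rho Y) as [y ->].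
      rewrite QM, QA, Habs. reflexivity.
  - intro a. split.
    + split; [|split; [|split; [|split; [|split]]]].
      * intros u v w. apply sig_eq. simpl. apply aA.
      * intros u. apply sig_eq. simpl. apply aI.
      * intros u v w. apply sig_eq. simpl. apply mA.
      * intros u. apply sig_eq. simpl. apply mI.
      * intros u v w. apply sig_eq. simpl. apply dl.
      * intros u v w. apply sig_eq. simpl. apply dr.
    + intros [u Hu] [v Hv]. apply sig_eq. simpl.
      apply (proj1 (Htr u a v (Hsy a u Hu) Hv)).
Qed.


Theorem lemma4p2 (T : Type) (add mul : T -> T -> T)
  (HS : idem_semiring add mul) :
  (forall x y : T, add x (mul (mul x y) x) = x) <->
  (congruence add mul (Dbul mul) /\
   @malcev LZplus_class D_class
     (quot (Dbul mul)) (@qadd T add (Dbul mul)) (@qmul T mul (Dbul mul))).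
Proof.
  pose proof HS as HS'.
  destruct HS' as [aA [aI [mA [mI [dl dr]]]]].
  split.
  - intro HI.
    pose proof (Dcong T add mul HS HI) as Hc.
    split; [exact Hc|].
    pose proof (quot_idem T add mul (Dbul mul) Hc HS) as HsM.
    pose proof (qadd_cls T add mul (Dbul mul) Hc) as QA. pose proof (qmul_cls T add mul (Dbul mul) Hc) as QM.
    destruct Hc as [Hrf [Hsy [Htr _]]].
    assert (Hcomm : forall X Y : quot (Dbul mul), qmul mul X Y = qmul mul Y X).
    { intros X Y. destruct (quot_surj T _ X) as [x ->], (quot_surj T _ Y) as [y ->].
      rewrite !QM. apply (proj2 (qcls_eq T _ Hrf Hsy Htr _ _)).
      assert (H : ev T mul [x;y;y;x;x;y] = ev T mul [x;y]).
      { transitivity (ev T mul [x;y;x;y]).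
        - transitivity (ev T mul [x;y;x;x;y]).
          + exact (ev_ctx T mul mA [x] [y;y] [y] [x;x;y] (ev_sq T mul mA mI [y])).
          + exact (ev_ctx T mul mA [x;y] [x;x] [x] [y] (ev_sq T mul mA mI [x])).
        - exact (ev_ctx T mul mA [] [x;y;x;y] [x;y] [] (ev_sq T mul mA mI [x;y])). }
      assert (H' : ev T mul [y;x;x;y;y;x] = ev T mul [y;x]).
      { transitivity (ev T mul [y;x;y;x]).
        - transitivity (ev T mul [y;x;y;y;x]).
          + exact (ev_ctx T mul mA [y] [x;x] [x] [y;y;x] (ev_sq T mul mA mI [x])).
          + exact (ev_ctx T mul mA [y;x] [y;y] [y] [x] (ev_sq T mul mA mI [y])).
        - exact (ev_ctx T mul mA [] [y;x;y;x] [y;x] [] (ev_sq T mul mA mI [y;x])). }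
      simpl in H, H'. injection H as H. injection H' as H'.
      split; rewrite <- !mA; assumption. }
    assert (Habs : forall X Y : quot (Dbul mul), qadd add X (qmul mul X Y) = X).
    { intros X Y. destruct (quot_surj T _ X) as [x ->], (quot_surj T _ Y) as [y ->].
      rewrite QM, QA. apply (proj2 (qcls_eq T _ Hrf Hsy Htr _ _)).
      assert (E1 : mul (add x (mul x y)) x = x) by (rewrite dr, mI; apply HI).
      assert (E2 : mul x (add x (mul x y)) = add x (mul x y)) by (rewrite dl, mI, mA, mI; reflexivity).
      split.
      - rewrite E1. exact E2.
      - rewrite E2. exact E1. }
    destruct (LZD _ _ _ HsM Hcomm Habs) as [rho [Hc2 [HD HL]]].
    exists HsM, rho, Hc2. split; [exact HD | exact HL].
  - intros [Hc [HsM [rho [Hc2 [HD HL]]]]] x y.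
    pose proof (qadd_cls T add mul (Dbul mul) Hc) as QA. pose proof (qmul_cls T add mul (Dbul mul) Hc) as QM.
    pose proof Hc as Hc'. destruct Hc' as [Hrf [Hsy [Htr _]]].
    set (X := qcls (Dbul mul) x). set (Y := qcls (Dbul mul) y).
    set (Z := qmul mul X (qmul mul Y X)).
    set (W := qadd add X Z).
    assert (HrW : rho X W).
    { destruct HD as [_ [_ [_ Hab]]].
      pose proof (Hab (qcls rho X) (qcls rho (qmul mul Y X))) as H.
      rewrite (qmul_cls _ _ _ rho Hc2), (qadd_cls _ _ _ rho Hc2) in H.
      pose proof Hc2 as Hc2'. destruct Hc2' as [Rrf [Rsy [Rtr _]]].
      apply (proj1 (qcls_eq _ rho Rrf Rsy Rtr _ _)) in H. apply Rsy. exact H. }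
    assert (HXW : qadd add X W = X).
    { pose proof Hc2 as Hc2'. destruct Hc2' as [Rrf _].
      destruct (HL X) as [_ H].
      specialize (H (exist _ X (Rrf X)) (exist _ W HrW)).
      apply (f_equal (@proj1_sig _ _)) in H. simpl in H. exact H. }
    assert (HWX : W = X).
    { rewrite <- HXW. unfold W. pose proof HsM as HsM2. destruct HsM2 as [qaA [qaI _]]. rewrite qaA, qaI. reflexivity. }
    unfold W, Z, X, Y in HWX. rewrite !QM, QA in HWX.
    apply (proj1 (qcls_eq T _ Hrf Hsy Htr _ _)) in HWX.
    destruct HWX as [H1 H2].
    assert (Hxz : mul x (add x (mul (mul x y) x)) = add x (mul (mul x y) x)).
    { rewrite dl, mI, !mA, mI. reflexivity. }
    assert (Hzx : mul (add x (mul (mul x y) x)) x = add x (mul (mul x y) x)).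
    { rewrite dr, mI, <- mA, mI. reflexivity. }
    rewrite <- mA in H2. rewrite (mA x y x) in H2.
    rewrite Hzx, Hxz in H2. exact H2.
Qed.
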